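(* Let $\lambda>0$ and $g^*\ge 0$. For finite disjoint instance sets $I_L, I_R$ whose instances $i$ carry real gradients $g_i$, define the split gain $$G(I_L,I_R)=\frac{\left(\sum_{i\in I_L}g_i\right)^2}{|I_L|+\lambda}+\frac{\left(\sum_{i\in I_R}g_i\right)^2}{|I_R|+\lambda}.$$ Let $\Delta G$ be the sensitivity of $G$: the supremum of $|G(I_L,I_R)-G(I_L',I_R')|$ over all pairs of neighboring split configurations in which every gradient involved satisfies $|g_i|\le g^*$. Then $\Delta G\le 3{g^*}^2$.
   Context: Two split configurations $(I_L,I_R)$ and $(I_L',I_R')$ are neighboring if one is obtained from the other by adding a single instance $s$ (with gradient $g_s$) to one of the two children, i.e. $(I_L',I_R')=(I_L\cup\{s\},I_R)$ or $(I_L,I_R\cup\{s\})$, or vice versa. Here $g^*=\max_i |g_i|$ over the instances in the dataset. *)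

(* Defs.v *)
From mathcomp Require Import all_boot all_order all_algebra.
Set Implicit Arguments. Unset Strict Implicit. Unset Printing Implicit Defensive.
Import Order.TTheory GRing.Theory Num.Theory.
Local Open Scope ring_scope.

Definition gain (R : realFieldType) (T : finType) (g : T -> R) (lambda : R)
  (IL IR : {set T}) : R :=
  (\sum_(i in IL) g i) ^+ 2 / (#|IL|%:R + lambda)
  + (\sum_(i in IR) g i) ^+ 2 / (#|IR|%:R + lambda).

Definition add_one (T : finType) (IL IR IL' IR' : {set T}) : Prop :=
  exists s : T, s \notin IL :|: IR /\
    ((IL' = s |: IL /\ IR' = IR) \/ (IL' = IL /\ IR' = s |: IR)).

Definition neighboring (T : finType) (IL IR IL' IR' : {set T}) : Prop :=
  [disjoint IL & IR] /\ [disjoint IL' & IR'] /\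
  (add_one IL IR IL' IR' \/ add_one IL' IR' IL IR).

(* Main.v *)
Require Import Defs.
From mathcomp Require Import all_boot all_order all_algebra.
From mathcomp Require Import ring lra.
Import Order.TTheory GRing.Theory Num.Theory.
Local Open Scope ring_scope.
Lemma core (R : realFieldType) (a S x G : R) : 0 < a -> 0 <= G ->
  `|S| <= a * G -> `|x| <= G ->
  `|S ^+ 2 / a - (S + x) ^+ 2 / (a + 1)| <= 3 * G ^+ 2.
Proof.
move=> ha hG /[dup] hS' hS hx.
move: hS hx; rewrite !ler_norml => /andP[s1 s2] /andP[x1 x2].
have hd : 0 < a * (a + 1) by apply: mulr_gt0 => //; lra.
have -> : S ^+ 2 / a - (S + x) ^+ 2 / (a + 1)
   = (S ^+ 2 * (a + 1) - a * (S + x) ^+ 2) / (a * (a + 1)).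
  field; apply/andP; split; apply/lt0r_neq0 => //; lra.
have p1 : S * x <= a * G ^+ 2 by nra.
have p1' : - (a * G ^+ 2) <= S * x by nra.
have p2 : x ^+ 2 <= G ^+ 2 by nra.
have p3 : S ^+ 2 <= a ^+ 2 * G ^+ 2 by nra.
rewrite ler_pdivrMr // ler_pdivlMr //; apply/andP; split; nra.
Qed.

Lemma step (R : realFieldType) (T : finType) (g : T -> R) (lambda G : R)
  (I : {set T}) (s : T) : 0 < lambda -> 0 <= G -> s \notin I ->
  (forall i, i \in s |: I -> `|g i| <= G) ->
  `|(\sum_(i in I) g i) ^+ 2 / (#|I|%:R + lambda)
    - (\sum_(i in s |: I) g i) ^+ 2 / (#|s |: I|%:R + lambda)| <= 3 * G ^+ 2.
Proof.
move=> hl hG hs hb.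
rewrite big_setU1 //= cardsU1 hs add1n -natr1.
have -> : #|I|%:R + 1 + lambda = (#|I|%:R + lambda) + 1 :> R by ring.
rewrite (addrC (g s)).
apply: core => //.
- by apply: ltr_pwDr => //; rewrite ler0n.
- apply: (le_trans (ler_norm_sum _ _ _)).
  apply: (le_trans (y := \sum_(i in I) G)).
    by apply: ler_sum => i hi; apply: hb; rewrite in_setU1 hi orbT.
  rewrite sumr_const -[G *+ _]mulr_natl; have := ler0n R #|I|; nra.
- by apply: hb; rewrite in_setU1 eqxx.
Qed.

Lemma addcase (R : realFieldType) (T : finType) (g : T -> R) (lambda G : R)
  (A B A' B' : {set T}) : 0 < lambda -> 0 <= G -> add_one A B A' B' ->
  (forall i, i \in A' :|: B' -> `|g i| <= G) ->
  `|gain g lambda A B - gain g lambda A' B'| <= 3 * G ^+ 2.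
Proof.
move=> hl hG [s [hs [[-> ->]|[-> ->]]]] hb; rewrite /gain.
- have -> : forall a b c : R, a + b - (c + b) = a - c by move=> *; ring.
  apply: step => // [|i hi]; first by move: hs; rewrite in_setU negb_or => /andP[].
  by apply: hb; rewrite in_setU hi.
- have -> : forall a b c : R, a + b - (a + c) = b - c by move=> *; ring.
  apply: step => // [|i hi]; first by move: hs; rewrite in_setU negb_or => /andP[].
  by apply: hb; rewrite in_setU hi orbT.
Qed.

Theorem lemma1 (R : realFieldType) (T : finType) (g : T -> R)
  (lambda gstar : R) (hlambda : 0 < lambda) (hgstar : 0 <= gstar)
  (IL IR IL' IR' : {set T}) :
  neighboring IL IR IL' IR' ->
  (forall i, i \in (IL :|: IR) :|: (IL' :|: IR') -> `|g i| <= gstar) ->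
  `|gain g lambda IL IR - gain g lambda IL' IR'| <= 3 * gstar ^+ 2.
Proof.
move=> [_ [_ [h|h]]] hb.
- apply: addcase h _ => // i hi; apply: hb; by rewrite in_setU hi orbT.
- rewrite distrC; apply: addcase h _ => // i hi; apply: hb; by rewrite in_setU hi.
Qed.
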